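(* Let $\{A_n\}_{n\ge 0}$ be determined by $A_0=A_1=1$ and $(n+1)A_{n+1}=2(n+1)A_n+3(n-1)A_{n-1}$ for $n\ge 1$ (the numbers of directed animals of size $n$). Then $\{A_n\}_{n\ge 0}$ is log-convex.
   Context: A sequence $a_0,a_1,\ldots$ of nonnegative real numbers is log-convex if $a_{k-1}a_{k+1}\ge a_k^2$ for all $k\ge 1$. *)

(* Defs.v *)
From mathcomp Require Import all_boot all_order all_algebra.
Set Implicit Arguments. Unset Strict Implicit. Unset Printing Implicit Defensive.
Import Order.TTheory GRing.Theory Num.Theory.
Local Open Scope ring_scope.

Definition log_convex (R : realFieldType) (a : nat -> R) : Prop :=
  (forall k, 0 <= a k) /\
  (forall k : nat, (1 <= k)%N -> a k.-1 * a k.+1 >= a k ^+ 2).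

(* Main.v *)
Require Import Defs.
From mathcomp Require Import all_boot all_order all_algebra.
From mathcomp Require Import ring lra.
Import Order.TTheory GRing.Theory Num.Theory.
Local Open Scope ring_scope.

Theorem corollary3p7 (A : nat -> rat) :
  A 0%N = 1 -> A 1%N = 1 ->
  (forall n : nat, (1 <= n)%N ->
     (n.+1)%:R * A n.+1 = 2 * (n.+1)%:R * A n + 3 * (n.-1)%:R * A n.-1) ->
  log_convex A.
Proof.
move=> A0 A1 hrec.
have S1 : forall n : nat, (n.+1)%:R = n%:R + 1 :> rat by move=> n; rewrite -addn1 natrD.
have A2 : A 2%N = 2.
  have := hrec 1%N isT; rewrite /= A1 A0 => h.
  rewrite [0%:R]/= in h.
  rewrite mulr0 mul0r addr0 mulr1 in h. lra.
have inv : forall n, (1 <= n)%N -> 0 < A n /\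
   6 * n%:R * A n <= (2 * n%:R + 1) * A n.+1 /\
   (2 * n%:R + 2) * A n.+1 <= (6 * n%:R + 3) * A n.
  elim=> [//|n IH] _.
  case: n IH => [_|n IH].
    rewrite A1 A2 /=. lra.
  have [ha [hl hu]] := IH isT.
  have hx : (1 : rat) <= n.+1%:R by rewrite ler1n.
  have h := hrec n.+2 isT. rewrite /= in h.
  move: ha hl hu h hx. rewrite !S1.
  set x := n%:R. set a := A n.+1. set b := A n.+2. set c := A n.+3.
  move=> ha hl hu h hx.
  have hb : 0 < b by nra.
  split; first exact: hb.
  split.
  - have : (x + 1 + 1 + 1) * ((2 * (x + 1 + 1) + 1) * c - 6 * (x + 1 + 1) * b) >= 0.
      nra.
    move=> H; have hp : 0 < x + 1 + 1 + 1 by lra. nra.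
  - have : (x + 1 + 1 + 1) * ((6 * (x + 1 + 1) + 3) * b - (2 * (x + 1 + 1) + 2) * c) >= 0.
      nra.
    move=> H; have hp : 0 < x + 1 + 1 + 1 by lra. nra.
split.
  case=> [|k]; first by rewrite A0.
  by have [h _] := inv k.+1 isT; apply: ltW.
case=> [//|m] _ /=.
case: m => [|m]; first by rewrite A0 A2 A1; lra.
have [ha [hl hu]] := inv m.+1 isT.
have h := hrec m.+2 isT. rewrite /= in h.
have hx : (0 : rat) <= m%:R by [].
move: ha hl hu h; rewrite ![m.+3%:R]S1 ![m.+2%:R]S1 ![m.+1%:R]S1.
set x := m%:R. set a := A m.+1. set b := A m.+2. set c := A m.+3.
move=> ha hl hu h.
have hb : 0 < b.
  have h1 : 0 < 6 * (x + 1) * a by apply: mulr_gt0 => //; clear -hx; lra.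
  have h2 := lt_le_trans h1 hl.
  by move: h2; rewrite pmulr_rgt0 //; clear -hx; lra.
set P := (6 * (x + 1) + 3) * a - (2 * (x + 1) + 2) * b.
have hP : 0 <= P by rewrite /P subr_ge0.
have hq1 : 0 <= (2 * (x + 1) + 2) * (x + 1 + 2) * b * P.
  apply: mulr_ge0 => //; apply: mulr_ge0; last exact: ltW.
  apply: mulr_ge0; clear -hx; lra.
have hq2 : 0 <= (x + 1 + 2) * (2 * (x + 1) - 1) * a * P.
  apply: mulr_ge0 => //; apply: mulr_ge0; last exact: ltW.
  apply: mulr_ge0; clear -hx; lra.
have hq3 : 0 <= 3 * (5 * (x + 1) + 2) * a ^+ 2.
  by apply: mulr_ge0; [clear -hx; lra | apply: sqr_ge0].
have e : (2 * (x + 1) + 2) ^+ 2 * ((x + 1 + 1 + 1) * (a * c - b ^+ 2)) =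
   (2 * (x + 1) + 2) * (x + 1 + 2) * b * P + (x + 1 + 2) * (2 * (x + 1) - 1) * a * P
   + 3 * (5 * (x + 1) + 2) * a ^+ 2.
  have -> : (x + 1 + 1 + 1) * (a * c - b ^+ 2) = a * ((x + 1 + 1 + 1) * c) - (x + 1 + 1 + 1) * b ^+ 2 by ring.
  rewrite h /P; ring.
have hD : 0 < (2 * (x + 1) + 2) ^+ 2 by apply: exprn_gt0; clear -hx; lra.
have : 0 <= (2 * (x + 1) + 2) ^+ 2 * ((x + 1 + 1 + 1) * (a * c - b ^+ 2)).
  by rewrite e; apply: addr_ge0; [apply: addr_ge0|].
rewrite pmulr_rge0 // => H.
have hp : 0 < x + 1 + 1 + 1 by clear -hx; lra.
rewrite pmulr_rge0 // subr_ge0 in H.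
by rewrite expr2 -(expr2 b).
Qed.
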